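(* Let $q$ be an odd prime power, $\omega$ a non-square in $\mathbb F_q$, $\epsilon\in\mathbb F_{q^2}$ with $\epsilon^2=\omega$, and write $z=z_1+\epsilon z_2$ ($z_i\in\mathbb F_q$) for $z\in\mathbb F_{q^2}$. Let $\mathcal C: aX^2+bXY+cXZ+dYZ+eZ^2=0$ be a non-singular conic of $\mathrm{PG}(2,q^2)$ with $d=1$ and $b\notin\mathbb F_q$. Put $A=-a_2b_1+a_1b_2$, $B=b_2c_1-b_1c_2-a_2d_1+a_1d_2$, $C=-c_2d_1+c_1d_2+b_2e_1-b_1e_2$, $D=d_2e_1-d_1e_2$, and let $\mathcal S\subset\mathrm{PG}(3,q)$ be the cubic surface in coordinates $(t_1:t_2:X:Z)$ with equation $$2t_1t_2(b_1X+d_1Z)-(t_1^2+\omega t_2^2)(b_2X+d_2Z)+AX^3+BX^2Z+CXZ^2+DZ^3=0.$$ Let $n_0$ and $n_\infty$ be the numbers of points of $\mathrm{PG}(3,q)$ on $\mathcal S$ with $t_1=t_2=0$ and with $X=Z=0$, respectively. Then $n_\infty=q+1$ and $n_0\in\{0,1,2,3\}$. *)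

(* Defs.v *)
From HB Require Import structures.
From mathcomp Require Import all_boot all_order all_algebra.
Set Implicit Arguments. Unset Strict Implicit. Unset Printing Implicit Defensive.
Import Order.TTheory GRing.Theory Num.Theory.
Local Open Scope ring_scope.

(* F plays F_q, K plays F_{q^2}; iota : F -> K is the embedding, and
   z1 + eps z2 is written emb iota eps z1 z2. *)
Definition emb (F K : finFieldType) (iota : {rmorphism F -> K}) (eps : K)
  (z1 z2 : F) : K := iota z1 + eps * iota z2.

(* Symmetric matrix of the conic aX^2+bXY+cXZ+dYZ+eZ^2 (odd characteristic). *)
Definition conic_mx (K : fieldType) (a b c d e : K) : 'M[K]_3 :=
  \matrix_(i < 3, j < 3)
    nth 0 (nth [::] [:: [:: a; b / 2%:R; c / 2%:R];
                       [:: b / 2%:R; 0; d / 2%:R];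
                       [:: c / 2%:R; d / 2%:R; e]] i) j.

Definition nonsingular_conic (K : fieldType) (a b c d e : K) : Prop :=
  \det (conic_mx a b c d e) != 0.

Definition coefA (F : fieldType) (a1 a2 b1 b2 c1 c2 d1 d2 e1 e2 : F) : F :=
  - a2 * b1 + a1 * b2.
Definition coefB (F : fieldType) (a1 a2 b1 b2 c1 c2 d1 d2 e1 e2 : F) : F :=
  b2 * c1 - b1 * c2 - a2 * d1 + a1 * d2.
Definition coefC (F : fieldType) (a1 a2 b1 b2 c1 c2 d1 d2 e1 e2 : F) : F :=
  - c2 * d1 + c1 * d2 + b2 * e1 - b1 * e2.
Definition coefD (F : fieldType) (a1 a2 b1 b2 c1 c2 d1 d2 e1 e2 : F) : F :=
  d2 * e1 - d1 * e2.

Definition cubicS (F : fieldType) (w a1 a2 b1 b2 c1 c2 d1 d2 e1 e2 : F)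
  (p : F * F * F * F) : F :=
  let: (t1, t2, X, Z) := p in
  2%:R * t1 * t2 * (b1 * X + d1 * Z)
  - (t1 ^+ 2 + w * t2 ^+ 2) * (b2 * X + d2 * Z)
  + coefA a1 a2 b1 b2 c1 c2 d1 d2 e1 e2 * X ^+ 3
  + coefB a1 a2 b1 b2 c1 c2 d1 d2 e1 e2 * X ^+ 2 * Z
  + coefC a1 a2 b1 b2 c1 c2 d1 d2 e1 e2 * X * Z ^+ 2
  + coefD a1 a2 b1 b2 c1 c2 d1 d2 e1 e2 * Z ^+ 3.

(* Number of points of PG(3,q) whose (nonzero) coordinate vectors satisfy the
   scalar-invariant predicate P: nonzero solutions divided by q - 1. *)
Definition nProjPoints (F : finFieldType) (P : pred (F * F * F * F)) : nat :=
  (#|[set p : F * F * F * F | (p != (0%R : F, 0%R : F, 0%R : F, 0%R : F)) && P p]| %/ (#|F|).-1)%N.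

Definition n_zero (F : finFieldType) (w a1 a2 b1 b2 c1 c2 d1 d2 e1 e2 : F) : nat :=
  nProjPoints (fun p => let: (t1, t2, X, Z) := p in (
    [&& t1 == 0, t2 == 0 & cubicS w a1 a2 b1 b2 c1 c2 d1 d2 e1 e2 p == 0])%R).

Definition n_infty (F : finFieldType) (w a1 a2 b1 b2 c1 c2 d1 d2 e1 e2 : F) : nat :=
  nProjPoints (fun p => let: (t1, t2, X, Z) := p in (
    [&& X == 0, Z == 0 & cubicS w a1 a2 b1 b2 c1 c2 d1 d2 e1 e2 p == 0])%R).

(* Main.v *)
Require Import Defs.
From HB Require Import structures.
From mathcomp Require Import all_boot all_order all_algebra.
From mathcomp Require Import ring.
Import GRing.Theory Num.Theory.
Local Open Scope ring_scope.
From mathcomp Require Import all_fingroup all_solvable all_field zify.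
Import GRing.Theory Num.Theory.
Local Open Scope ring_scope.
Lemma two_neq0 (F: finFieldType) : odd #|F| -> (2%:R : F) != 0.
Proof.
move=> hodd; apply/negP=> h2.
have ch: (2 \in [pchar F])%N by rewrite inE h2.
have := abelem_pgroup (fin_ring_pchar_abelem ch).
rewrite /pgroup cardsT => /p_natP [k hk].
move: hodd (finNzRing_gt1 F); rewrite hk; case: k {hk} => // k.
by rewrite expnS oddM.
Qed.
Lemma conic_det (K : fieldType) (a b c e : K) :
  \det (conic_mx a b c 1 e) = (2%:R * 2%:R^-1 * b * c - b^+2 * e - a) * (2%:R^-1)^+2.
Proof.
rewrite (expand_det_row _ ord0) !big_ord_recl big_ord0 /cofactor.
rewrite !(expand_det_row _ ord0) !big_ord_recl big_ord0 /cofactor.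
rewrite !det_mx11 !mxE !big_ord0 /bump /= !expr0 !expr1.
rewrite /bump /= !mul1r.
rewrite (_ : (0 + (1 + (1 + 0)))%N = 2%N) //. set h := (2%:R^-1 : K). clearbody h. ring.
Qed.

Lemma det_zero (F K : finFieldType) (iota : {rmorphism F -> K}) (eps : K)
  (a1 a2 b1 b2 c1 c2 e1 e2 : F) :
  (2%:R : K) != 0 -> b2 != 0 ->
  Defs.coefA a1 a2 b1 b2 c1 c2 1 0 e1 e2 = 0 ->
  Defs.coefB a1 a2 b1 b2 c1 c2 1 0 e1 e2 = 0 ->
  Defs.coefC a1 a2 b1 b2 c1 c2 1 0 e1 e2 = 0 ->
  Defs.coefD a1 a2 b1 b2 c1 c2 1 0 e1 e2 = 0 ->
  \det (conic_mx (emb iota eps a1 a2) (emb iota eps b1 b2)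
    (emb iota eps c1 c2) (emb iota eps 1 0) (emb iota eps e1 e2)) = 0.
Proof.
move=> h2 hb2; rewrite /Defs.coefA /Defs.coefB /Defs.coefC /Defs.coefD => hA hB hC hD.
have e2E : e2 = 0 by move: hD; rewrite mul0r mul1r sub0r => /eqP; rewrite oppr_eq0 => /eqP.
have c2E : c2 = b2 * e1.
  by apply/eqP; rewrite -subr_eq0 -oppr_eq0 -hC e2E; apply/eqP; ring.
have a2E : a2 = b2 * c1 - b1 * c2.
  by apply/eqP; rewrite -subr_eq0 -oppr_eq0 -hB; apply/eqP; ring.
have a1E : a1 = b1 * c1 - b1 ^+ 2 * e1.
  apply: (mulIf hb2); apply/eqP; rewrite -subr_eq0 -hA a2E c2E; apply/eqP; ring.
have -> : emb iota eps 1 0 = 1 by rewrite /emb rmorph1 rmorph0 mulr0 addr0.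
rewrite conic_det mulfV // mul1r.
rewrite /emb a1E a2E c2E e2E !rmorphB !rmorphM ?rmorphXn rmorph0.
apply/eqP; rewrite mulf_eq0; apply/orP; left; apply/eqP; ring.
Qed.
Lemma card_nz (F : finFieldType) : #|[set s : F | s != 0]| = #|F|.-1.
Proof.
rewrite -(cardsC1 (0:F)); apply: eq_card => x; by rewrite !inE.
Qed.

Lemma cubic_count (F : finFieldType) (A B C D : F) :
  ~~ [&& A == 0, B == 0, C == 0 & D == 0] ->
  (#|[set u : F * F | ((u != (0%R : F, 0%R : F)) &&
     (A * u.1 ^+ 3 + B * u.1 ^+ 2 * u.2 + C * u.1 * u.2 ^+ 2 + D * u.2 ^+ 3 == 0))%R]|
   <= 3 * #|F|.-1)%N.
Proof.
move=> hnz.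
pose g : {poly F} := Poly [:: D; C; B; A].
have gnz : g != 0.
  apply: contra hnz => /eqP g0.
  have hc i : g`_i = 0 by rewrite g0 coef0.
  move: (hc 0%N) (hc 1%N) (hc 2%N) (hc 3%N); rewrite !coef_Poly /= => -> -> -> ->.
  by rewrite eqxx.
pose R := [set x | root g x].
pose Nz := [set s : F | s != 0].
pose L := [set u : F * F | [&& u.2 == 0, u.1 != 0 & A == 0]].
pose h := fun p : F * F => (p.1 * p.2, p.2).
set T := [set u | _].
have sub : T \subset (h @: setX R Nz) :|: L.
  apply/subsetP => -[X Z]; rewrite !inE /= => /andP [hu hf].
  have [Z0|Znz] := eqVneq Z 0.
    have X0 : X != 0 by apply: contra hu => /eqP ->; rewrite Z0.
    rewrite X0 /=.
    move: hf; rewrite Z0 !expr0n /= !mulr0 !addr0 mulf_eq0 expf_eq0 /= (negbTE X0).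
    by rewrite orbF => ->; rewrite orbT.
  rewrite orbF; apply/imsetP; exists (X / Z, Z).
    rewrite !inE /= Znz andbT /root horner_Poly /=.
    have -> : ((((0 * (X / Z) + A) * (X / Z) + B) * (X / Z) + C) * (X / Z) + D) =
       (A * X ^+ 3 + B * X ^+ 2 * Z + C * X * Z ^+ 2 + D * Z ^+ 3) / Z ^+ 3.
      by field.
    by rewrite (eqP hf) mul0r.
  by rewrite /h /= divfK.
have sizeR : (#|R| < size g)%N.
  rewrite cardE; apply: max_poly_roots => //; last exact: enum_uniq.
  by apply/allP => x; rewrite mem_enum inE.
have sg : (size g <= 4)%N by apply: (leq_trans (size_Poly _)).
have sgA : A = 0 -> (size g <= 3)%N.
  move=> A0; apply/leq_sizeP => j hj; rewrite coef_Poly.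
  case: j hj => [|[|[|[|j]]]] //= _; by rewrite nth_nil.
have cL : (#|L| <= (A == 0)%R * #|F|.-1)%N.
  have [A0|An0] := eqVneq A 0.
    rewrite mul1n -card_nz.
    apply: (leq_trans _ (leq_imset_card (fun x : F => (x, 0 : F)) Nz)).
    apply/subset_leq_card/subsetP => -[X Z]; rewrite !inE /= => /and3P [/eqP -> X0 _].
    by apply/imsetP; exists X; rewrite // inE.
  rewrite mul0n leqn0 cards_eq0; apply/eqP/setP => u; rewrite !inE.
  by rewrite (negbTE An0) !andbF.
apply: (leq_trans (subset_leq_card sub)).
apply: (leq_trans (leq_card_setU _ _)).
apply: leq_trans (leq_add (leq_imset_card _ _) cL) _.
rewrite cardsX card_nz.
have [A0|An0] := eqVneq A 0.
  have : (#|R| <= 2)%N by have := sgA A0; lia.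
  rewrite mul1n; nia.
rewrite mul0n addn0; apply: leq_mul => //; lia.
Qed.

Lemma div_q (q : nat) : (1 < q)%N -> ((q * q).-1 %/ q.-1 = q.+1)%N.
Proof.
move=> hq; have -> : (q * q).-1 = (q.+1 * q.-1)%N by case: q hq => // m _; simpl; nia.
by rewrite mulnK //; lia.
Qed.

Theorem mainTheorem8 (F K : finFieldType) (iota : {rmorphism F -> K})
  (hodd : odd #|F|) (hK : #|K| = (#|F| ^ 2)%N)
  (w : F) (hw : forall x : F, x ^+ 2 != w)
  (eps : K) (heps : eps ^+ 2 = iota w)
  (a1 a2 b1 b2 c1 c2 e1 e2 : F) :
  nonsingular_conic (emb iota eps a1 a2) (emb iota eps b1 b2)
    (emb iota eps c1 c2) (emb iota eps 1 0) (emb iota eps e1 e2) ->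
  (forall x : F, iota x != emb iota eps b1 b2) ->
  n_infty w a1 a2 b1 b2 c1 c2 1 0 e1 e2 = (#|F|).+1 /\
  n_zero w a1 a2 b1 b2 c1 c2 1 0 e1 e2 \in [:: 0%N; 1%N; 2%N; 3%N].
Proof.
move=> hns hb.
have hq := finNzRing_gt1 F.
split.
  rewrite /n_infty /nProjPoints.
  set S := [set p | _].
  have -> : S = (fun u : F * F => (u.1, u.2, 0 : F, 0 : F)) @: [set u : F * F | u != (0, 0)].
    apply/setP => -[[[t1 t2] X] Z]; rewrite !inE /=.
    apply/idP/imsetP.
      case/andP => hp /and3P [/eqP X0 /eqP Z0 _]; exists (t1, t2) => //.
        by rewrite inE; apply: contra hp; case/eqP => -> ->; rewrite X0 Z0.
      by rewrite X0 Z0.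
    case=> -[u1 u2]; rewrite inE /= => hu [-> -> -> ->].
    rewrite eqxx /=; apply/andP; split.
      by apply: contra hu; case/eqP => -> ->.
    apply/eqP; ring.
  rewrite card_imset; last by move=> [? ?] [? ?] /= [-> ->].
  rewrite (_ : #|[set u : F * F | u != (0, 0)]| = #|[set~ ((0 : F), (0 : F))]|); last first.
    by apply: eq_card => x; rewrite !inE.
  by rewrite cardsC1 card_prod div_q.
set A := Defs.coefA a1 a2 b1 b2 c1 c2 1 0 e1 e2.
set B := Defs.coefB a1 a2 b1 b2 c1 c2 1 0 e1 e2.
set C := Defs.coefC a1 a2 b1 b2 c1 c2 1 0 e1 e2.
set D := Defs.coefD a1 a2 b1 b2 c1 c2 1 0 e1 e2.
have hnz : ~~ [&& A == 0, B == 0, C == 0 & D == 0].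
  apply/negP => /and4P [/eqP hA /eqP hB /eqP hC /eqP hD].
  move: hns; rewrite /nonsingular_conic det_zero ?eqxx //.
    by rewrite -(rmorph_nat iota) fmorph_eq0 two_neq0.
  apply: contraTneq (hb b1) => ->; by rewrite /emb rmorph0 mulr0 addr0 eqxx.
have hle := @cubic_count F A B C D hnz.
rewrite /n_zero /nProjPoints.
set S := [set p | _].
set T := [set u | _] in hle.
have -> : S = (fun u : F * F => (0 : F, 0 : F, u.1, u.2)) @: T.
  apply/setP => -[[[t1 t2] X] Z]; rewrite !inE /=.
  apply/idP/imsetP.
    case/andP => hp /and3P [/eqP t10 /eqP t20 hc]; exists (X, Z).
      rewrite inE /=; apply/andP; split.
        by apply: contra hp; case/eqP => -> ->; rewrite t10 t20.
      by move: hc; rewrite t10 t20 /= => /eqP <-; apply/eqP; rewrite /A /B /C /D; ring.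
    by rewrite t10 t20.
  case=> -[u1 u2]; rewrite inE /= => /andP [hu hc] [-> -> -> ->].
  rewrite eqxx /=; apply/andP; split.
    by apply: contra hu; case/eqP => -> ->.
  by apply/eqP; rewrite -[X in _ = X](eqP hc) /A /B /C /D; ring.
rewrite card_imset; last by move=> [? ?] [? ?] /= [-> ->].
have : (#|T| %/ #|F|.-1 <= 3)%N.
  by apply: leq_trans (leq_div2r _ hle) _; rewrite mulnK //; move: hq; case: #|F| => [|[|n]].
by move: (_ %/ _)%N => n; case: n => [|[|[|[|n]]]].
Qed.
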